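(* Let $K=2^m$ with $m\in\mathbb{N}$, and let $c\in\mathbb{R}^{K-1}$ be the vector with $c_i=1$ for odd $i$ and $c_i=0$ for even $i$. Suppose $a\in\mathbb{R}^{K-1}$ is written as $a=\mu c+\mu\epsilon$ with $\mu=\frac2K\|a\|_1\in\mathbb{R}$ and $\epsilon\in\mathbb{R}^{K-1}$ satisfying $\sum_i\epsilon_i=0$. Then $$\Psi e^{-\Psi a}=Ke^{-\frac{K\mu}{2}}1_{K-1}-Ke^{-\frac{K\mu}{2}}\mu\,\epsilon+2\big(e^{-K\mu}-e^{-\frac{K\mu}{2}}\big)\big(1-\mu(\Psi\epsilon)_1\big)c+O(\|\epsilon\|_1^2),$$ where the exponential is taken entrywise.
   Context: Sylvester Hadamard matrices: $\Phi_1=(1)$, $\Phi_{2^m}=\begin{bmatrix}\Phi_{2^{m-1}}&\Phi_{2^{m-1}}\\ \Phi_{2^{m-1}}&-\Phi_{2^{m-1}}\end{bmatrix}$, $\Phi=\Phi_K$. $\Psi\in\mathbb{R}^{(K-1)\times(K-1)}$ is obtained from $1_K1_K^T-\Phi$ by deleting its first row and first column, indexed $1,\dots,K-1$. $\|\epsilon\|_1=\sum_i|\epsilon_i|$. *)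

(* Defs.v *)
From HB Require Import structures.
From mathcomp Require Import all_boot all_order all_algebra.
From mathcomp Require Import reals.
From mathcomp Require Import sequences exp.
Set Implicit Arguments. Unset Strict Implicit. Unset Printing Implicit Defensive.
Import Order.TTheory GRing.Theory Num.Theory.
Local Open Scope ring_scope.

(* Entries of the Sylvester Hadamard matrix Phi_{2^m}, 0-based indices,
   following the recursive block definition
   Phi_{2^(m+1)} = [Phi_{2^m}, Phi_{2^m}; Phi_{2^m}, -Phi_{2^m}]. *)
Fixpoint had {R : pzRingType} (m i j : nat) : R :=
  match m with
  | 0 => 1
  | m'.+1 =>
      let h := (2 ^ m')%N in
      let i' := if (i < h)%N then i else (i - h)%N in
      let j' := if (j < h)%N then j else (j - h)%N in
      if (h <= i)%N && (h <= j)%N then - had m' i' j' else had m' i' j'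
  end.

Definition Phi {R : pzRingType} (m : nat) : 'M[R]_(2 ^ m) :=
  \matrix_(i, j) had m i j.

(* Psi = (1 1^T - Phi) with first row and column deleted:
   entry (i,j) (0-based, i,j < 2^m - 1) is 1 - Phi_{i+1, j+1}. *)
Definition psi_entry {R : pzRingType} (m i j : nat) : R := 1 - had m i.+1 j.+1.

Definition Psi {R : pzRingType} (m : nat) : 'M[R]_(2 ^ m - 1) :=
  \matrix_(i, j) psi_entry m i j.

(* (Psi v)_1 : first entry (paper index 1) of Psi v. *)
Definition Psi_first {R : pzRingType} (m : nat) (v : 'cV[R]_(2 ^ m - 1)) : R :=
  \sum_(j < 2 ^ m - 1) psi_entry m 0 j * v j 0.

(* c_i = 1 for odd paper index i (1-based), i.e. 0-based index j with j+1 odd. *)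
Definition cvec {R : pzRingType} (m : nat) : 'cV[R]_(2 ^ m - 1) :=
  \col_j (if odd j.+1 then 1 else 0).

Definition l1norm {R : numDomainType} {n : nat} (v : 'cV[R]_n) : R :=
  \sum_i `|v i 0|.

Definition expv {R : realType} {n : nat} (v : 'cV[R]_n) : 'cV[R]_n :=
  \col_i expR (v i 0).

(* Main.v *)
Require Import Defs.
From HB Require Import structures.
From mathcomp Require Import all_boot all_order all_algebra.
From mathcomp Require Import reals.
From mathcomp Require Import sequences exp.
From mathcomp Require Import zify ring lra.
Import Order.TTheory GRing.Theory Num.Theory.
Local Open Scope ring_scope.

Section Had.
Variable R : realType.

Lemma had_sym m i j : had (R:=R) m i j = had m j i.
Proof. elim: m i j => [//|m IH] i j /=; by rewrite IH andbC. Qed.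

Lemma had0 m j : had (R:=R) m 0 j = 1.
Proof.
elim: m j => [//|m IH] j /=.
have hp : (0 < 2 ^ m)%N by rewrite expn_gt0.
by rewrite hp (leqNgt _ 0) hp /= IH.
Qed.

Lemma had_pm m i j : had (R:=R) m i j = 1 \/ had (R:=R) m i j = -1.
Proof.
elim: m i j => [|m IH] i j /=; first by left.
case: ifP => _; case: (IH (if (i < 2 ^ m)%N then i else (i - 2 ^ m)%N)
   (if (j < 2 ^ m)%N then j else (j - 2 ^ m)%N)) => ->; rewrite ?opprK; by [left|right].
Qed.

Lemma had_lo m i k : (k < 2 ^ m)%N ->
  had (R:=R) m.+1 i k = had m (if (i < 2 ^ m)%N then i else (i - 2 ^ m)%N) k.
Proof. move=> hk /=. by rewrite hk (leqNgt _ k) hk andbF. Qed.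

Lemma had_hi m i k : (k < 2 ^ m)%N ->
  had (R:=R) m.+1 i (2 ^ m + k) = (if (2 ^ m <= i)%N then -1 else 1) *
     had m (if (i < 2 ^ m)%N then i else (i - 2 ^ m)%N) k.
Proof.
move=> hk /=. rewrite (ltnNge (2 ^ m + k)) leq_addr /= addKn andbT.
by case: ifP; rewrite ?mulN1r ?mul1r.
Qed.

Lemma sum_double (F : nat -> R) h :
  \sum_(0 <= k < h + h) F k = \sum_(0 <= k < h) F k + \sum_(0 <= k < h) F (h + k)%N.
Proof.
rewrite (big_cat_nat (n := h)) ?leq_addr //; congr (_ + _).
rewrite -{1}(add0n h) big_addn addnK.
by apply: eq_bigr => k _; rewrite addnC.
Qed.

Lemma had_orth m i j : (i < 2 ^ m)%N -> (j < 2 ^ m)%N ->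
  \sum_(0 <= k < 2 ^ m) had (R:=R) m i k * had m j k =
  if i == j then (2 ^ m)%:R else 0.
Proof.
elim: m i j => [|m IH] i j hi hj.
  rewrite expn0 in hi hj *; case: i hi => // _; case: j hj => // _.
  by rewrite big_nat1 /= mulr1.
rewrite expnS mul2n -addnn sum_double.
rewrite [X in X + _](eq_big_nat _ _ (F2 := fun k => had m (if (i < 2 ^ m)%N then i else (i - 2 ^ m)%N) k *
     had m (if (j < 2 ^ m)%N then j else (j - 2 ^ m)%N) k)); last first.
  by move=> k /andP[_ hk]; rewrite !had_lo.
rewrite [X in _ + X](eq_big_nat _ _ (F2 := fun k => ((if (2 ^ m <= i)%N then -1 else 1) *
     (if (2 ^ m <= j)%N then -1 else 1)) *
     (had m (if (i < 2 ^ m)%N then i else (i - 2 ^ m)%N) k *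
     had m (if (j < 2 ^ m)%N then j else (j - 2 ^ m)%N) k))); last first.
  move=> k /andP[_ hk]; rewrite !had_hi //. ring.
rewrite -mulr_sumr.
have hi' : ((if (i < 2 ^ m)%N then i else (i - 2 ^ m)%N) < 2 ^ m)%N.
  case: ifP => // _; rewrite expnS in hi; lia.
have hj' : ((if (j < 2 ^ m)%N then j else (j - 2 ^ m)%N) < 2 ^ m)%N.
  case: ifP => // _; rewrite expnS in hj; lia.
rewrite IH // natrD.
case: (ltnP i (2 ^ m)) => hi2; case: (ltnP j (2 ^ m)) => hj2.
- by case: ifP => _; rewrite ?mulr1 ?mul1r ?addr0.
- have -> : (i == j) = false by apply/negbTE; apply/eqP; lia.
  case: ifP => _; ring.
- have -> : (i == j) = false by apply/negbTE; apply/eqP; lia.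
  case: ifP => _; ring.
- rewrite eqn_sub2rE //. case: ifP => _; ring.
Qed.

Lemma had_row m i : (i < 2 ^ m)%N ->
  \sum_(0 <= k < 2 ^ m) had (R:=R) m i k = if i == 0%N then (2 ^ m)%:R else 0.
Proof.
move=> hi; rewrite -had_orth ?expn_gt0 //.
by apply: eq_bigr => k _; rewrite had0 mulr1.
Qed.

Lemma had_1 m i : (0 < m)%N -> (i < 2 ^ m)%N ->
  had (R:=R) m i 1 = if odd i then -1 else 1.
Proof.
elim: m i => [//|m IH] i _ hi.
case: m IH hi => [|m] IH hi.
  by case: i hi => [|[|]] //= _.
rewrite had_lo; last by rewrite expnS; have := expn_gt0 2 m; lia.
case: ifP => h; first by rewrite IH.
rewrite IH //; last by rewrite expnS in hi; lia.
by rewrite oddB ?oddX /= ?addbF // leqNgt h.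
Qed.

Lemma sumN m (F : nat -> R) :
  \sum_(j < 2 ^ m - 1) F j.+1 = \sum_(0 <= l < 2 ^ m) F l - F 0%N.
Proof.
have E : (2 ^ m = (2 ^ m - 1).+1)%N by rewrite subn1 prednK // expn_gt0.
rewrite [in RHS]E big_nat_recl // big_mkord. ring.
Qed.

Lemma psi_sym m i j : psi_entry (R:=R) m i j = psi_entry m j i.
Proof. by rewrite /psi_entry had_sym. Qed.

Lemma psi_row m i : (i < 2 ^ m - 1)%N ->
  \sum_(j < 2 ^ m - 1) psi_entry (R:=R) m i j = (2 ^ m)%:R.
Proof.
move=> hi.
rewrite /psi_entry sumrB (sumN m (fun l => had m i.+1 l)) had_row; last by lia.
rewrite sumr_const card_ord had_sym had0 /=.
have E : (2 ^ m = (2 ^ m - 1).+1)%N by rewrite subn1 prednK // expn_gt0.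
rewrite [in RHS]E -natr1. rewrite -[_ *+ _]mulr_natr mul1r. ring.
Qed.

Lemma psi_sq m i k : (i < 2 ^ m - 1)%N -> (k < 2 ^ m - 1)%N ->
  \sum_(j < 2 ^ m - 1) psi_entry (R:=R) m i j * psi_entry m j k =
  (if i == k then (2 ^ m)%:R else 0) + (2 ^ m)%:R.
Proof.
move=> hi hk.
rewrite /psi_entry.
rewrite (eq_bigr (fun j : 'I_(2 ^ m - 1) => (1 - had m i.+1 j.+1 - had m k.+1 j.+1)
   + had m i.+1 j.+1 * had m k.+1 j.+1)); last by move=> j _; rewrite (had_sym m j.+1); ring.
rewrite big_split /= !sumrB.
rewrite (sumN m (fun l => had m i.+1 l)) (sumN m (fun l => had m k.+1 l)).
rewrite (sumN m (fun l => had m i.+1 l * had m k.+1 l)).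
rewrite !had_row ?had_orth; try lia.
rewrite sumr_const card_ord !(had_sym m _ 0) !had0 /= eqSS.
have E : (2 ^ m = (2 ^ m - 1).+1)%N by rewrite subn1 prednK // expn_gt0.
rewrite -[_ *+ _]mulr_natr mul1r.
rewrite natrB ?expn_gt0 //.
case: ifP => _; ring.
Qed.

Lemma psi_0 m i : (0 < m)%N -> (i < 2 ^ m - 1)%N ->
  psi_entry (R:=R) m i 0 = if odd i.+1 then 2 else 0.
Proof.
move=> hm hi; rewrite /psi_entry had_1 //; last by lia.
case: ifP => _; ring.
Qed.

Lemma sum_delta0 N (F : nat -> R) : (0 < N)%N ->
  \sum_(j < N) F j * (if (j : nat) == 0%N then 1 else 0) = F 0%N.
Proof.
case: N => // N _; rewrite big_ord_recl /= mulr1 big1 ?addr0 // => j _.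
by rewrite mulr0.
Qed.

Lemma sum_deltai N (i : 'I_N) (F : 'I_N -> R) :
  \sum_(k < N) (if (i : nat) == k then 1 else 0) * F k = F i.
Proof.
rewrite (bigD1 i) //= eqxx mul1r big1 ?addr0 // => k hk.
have -> : ((i : nat) == k) = false by apply/negbTE; rewrite eq_sym.
by rewrite mul0r.
Qed.

Lemma exp_rem (x : R) : `|x| <= 1/2 -> 0 <= expR x - 1 - x <= 2 * x ^+ 2.
Proof.
move=> hx.
have h1 := expR_ge1Dx x.
have h2 := expR_ge1Dx (- x).
have h3 := expRxMexpNx_1 x.
have h4 := expR_gt0 x.
have hx' : -(1/2) <= x <= 1/2 by rewrite -ler_norml.
case/andP: hx' => hxa hxb.
apply/andP; split; first lra.
nra.
Qed.

Lemma psi_c m j : (0 < m)%N -> (j < 2 ^ m - 1)%N ->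
  \sum_(k < 2 ^ m - 1) psi_entry (R:=R) m j k * (if odd k.+1 then 1 else 0) =
  (2 ^ m)%:R / 2 * (1 + (if j == 0%N then 1 else 0)).
Proof.
move=> hm hj.
rewrite (eq_bigr (fun k : 'I_(2 ^ m - 1) => psi_entry m j k * psi_entry m k 0 / 2)); last first.
  by move=> k _; rewrite psi_0 //; case: ifP => _; field.
rewrite -mulr_suml psi_sq //; last by lia.
by case: ifP => _; field.
Qed.

Lemma had_abs m i j : `|psi_entry (R:=R) m i j| <= 2.
Proof.
rewrite /psi_entry; case: (had_pm m i.+1 j.+1) => ->.
  by rewrite subrr normr0.
rewrite opprK ger0_norm; lra.
Qed.
End Had.

Lemma aux1 (R : realType) (k mu : R) :
  expR (- (mu * (k / 2 * (1 + 1)))) = expR (- (k * mu / 2)) + (expR (- (k * mu)) - expR (- (k * mu / 2))) * 1.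
Proof. rewrite mulr1 [RHS]addrC subrK; congr expR; field; done. Qed.
Lemma aux2 (R : realType) (k mu : R) :
  expR (- (mu * (k / 2 * (1 + 0)))) = expR (- (k * mu / 2)) + (expR (- (k * mu)) - expR (- (k * mu / 2))) * 0.
Proof. rewrite mulr0 !addr0 mulr1; congr expR; field; done. Qed.

Lemma alg (R : realType) (K E1 E2 mu p0 pe0 ei ci S1 S2 S3 S4 T : R) :
  S1 = K -> S2 = p0 -> S3 = K * ei -> S4 = p0 * pe0 -> p0 = 2 * ci ->
  E2 * S1 + (E1 - E2) * S2 + (- (mu * E2)) * S3 + (- (mu * (E1 - E2))) * S4 + T
  - (K * E2 * 1 - K * E2 * mu * ei + 2 * (E1 - E2) * (1 - mu * pe0) * ci) = T.
Proof. move=> -> -> -> -> ->; ring. Qed.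

Lemma alg2 (R : realType) (p d pe mu E1 E2 ex : R) :
  p * ((E2 + (E1 - E2) * d) * ex) = E2 * p + (E1 - E2) * (p * d) + (- (mu * E2)) * (p * pe)
  + (- (mu * (E1 - E2))) * (p * pe * d)
  + p * ((E2 + (E1 - E2) * d) * (ex - 1 - - (mu * pe))).
Proof. ring. Qed.

Lemma bnd (R : realType) (p v r V B : R) : `|p| <= 2 -> 0 <= v -> v <= V -> 0 <= r -> r <= B ->
  `|p * (v * r)| <= 2 * (V * B).
Proof.
move=> hp hv hV hr hB; rewrite normrM normrM (ger0_norm hv) (ger0_norm hr).
apply: ler_pM; [exact: normr_ge0 | exact: mulr_ge0 | done | exact: ler_pM].
Qed.

Lemma xbound (R : realType) (mu pe L : R) : `|pe| <= 2 * L -> 0 <= L -> L * (4 * `|mu| + 1) < 1 ->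
  `|- (mu * pe)| <= 1 / 2 /\ (- (mu * pe)) ^+ 2 <= 4 * mu ^+ 2 * L ^+ 2.
Proof.
move=> hp hL h.
have hu := normr_ge0 mu. have hq := normr_ge0 pe.
split.
  rewrite normrN normrM; nra.
rewrite -[(- (mu * pe)) ^+ 2](real_normK (num_real _)) normrN normrM -[mu ^+ 2](real_normK (num_real _)).
have hq2 : `|pe| ^+ 2 <= 4 * L ^+ 2 by nra.
rewrite exprMn (mulrC 4) -[_ * 4 * _]mulrA; apply: ler_wpM2l; [exact: exprn_ge0 | done].
Qed.

Lemma eqC (R : realType) (N V mu L : R) :
  N * (N * (2 * (V * (8 * mu ^+ 2 * L ^+ 2)))) = N * (N * (2 * (V * (8 * mu ^+ 2)))) * L ^+ 2.
Proof. ring. Qed.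

Lemma e8 (R : realType) (a b : R) : 8 * a * b = 2 * (4 * a * b).
Proof. ring. Qed.

Theorem lemmaD9 (R : realType) (m : nat) (mu : R) :
  exists C : R, exists delta : R, 0 < delta /\
    forall eps : 'cV[R]_(2 ^ m - 1),
      \sum_i eps i 0 = 0 ->
      l1norm eps < delta ->
      let a := mu *: cvec m + mu *: eps in
      mu = 2 / (2 ^ m)%:R * l1norm a ->
      let K : R := (2 ^ m)%:R in
      l1norm (Psi m *m expv (- (Psi m *m a))
              - (K * expR (- (K * mu / 2)) *: const_mx 1
                 - (K * expR (- (K * mu / 2)) * mu) *: eps
                 + (2 * (expR (- (K * mu)) - expR (- (K * mu / 2)))
                      * (1 - mu * Psi_first eps)) *: cvec m))
        <= C * l1norm eps ^+ 2.
Proof.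
case: m => [|m].
  exists 0, 1; split => // eps _ _ a _; cbv zeta.
  by rewrite /l1norm big_ord0 mul0r.
have hm : (0 < m.+1)%N by [].
move: (m.+1) hm => {}m hm.
set N := (2 ^ m - 1)%N.
set K0 : R := (2 ^ m)%:R.
set E1 := expR (- (K0 * mu)).
set E2 := expR (- (K0 * mu / 2)).
exists (N%:R * (N%:R * (2 * ((E1 + E2) * (8 * mu ^+ 2))))), (1 / (4 * `|mu| + 1)).
split; first by rewrite divr_gt0 // ltr_pwDr // mulr_ge0.
move=> eps hs hL a _; cbv zeta; rewrite -/K0 -/E1 -/E2.
pose pe := fun j : nat => \sum_(k < N) psi_entry m j k * eps k 0.
pose x := fun j : nat => - (mu * pe j).
pose v := fun j : nat => E2 + (E1 - E2) * (if j == 0%N then 1 else 0).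
pose r := fun j : nat => expR (x j) - 1 - x j.
have hexp : forall j : 'I_N, (expv (- (Psi m *m a))) j 0 = v j * expR (x j).
  move=> j; rewrite !mxE.
  under eq_bigr => k _ do rewrite !mxE.
  rewrite (eq_bigr (fun k : 'I_N => mu * (psi_entry m j k * (if odd k.+1 then 1 else 0))
     + mu * (psi_entry m j k * eps k 0))); last by move=> k _; rewrite mulrDr mulrCA [X in _ + X]mulrCA.
  rewrite big_split /= -!mulr_sumr psi_c //.
  rewrite opprD expRD /v /x /pe /=; congr (_ * _).
  rewrite /E1 /E2 /K0; case: ifP => _; [exact: aux1 | exact: aux2].
have h3 : forall i : 'I_N, \sum_(j < N) psi_entry m i j * pe j = K0 * eps i 0.
  move=> i; rewrite /pe.
  under eq_bigr => j _ do rewrite mulr_sumr.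
  rewrite exchange_big /=.
  have hk : forall k : 'I_N, \sum_(j < N) psi_entry m i j * (psi_entry m j k * eps k 0)
      = ((if (i : nat) == k then K0 else 0) + K0) * eps k 0.
    move=> k; rewrite -psi_sq // mulr_suml; apply: eq_bigr => j _; exact: mulrA.
  under eq_bigr => k _ do rewrite hk mulrDl.
  rewrite big_split /= (eq_bigr (fun k : 'I_N => (if (i:nat) == k then 1 else 0) * (K0 * eps k 0))); last first.
    by move=> k _; case: ifP; rewrite ?mul1r ?mul0r.
  by rewrite sum_deltai -mulr_sumr hs mulr0 addr0.
have hN : (0 < N)%N.
  have : (2 <= 2 ^ m)%N by rewrite -{1}(expn1 2) leq_exp2l.
  rewrite /N; lia.
have key : forall i : 'I_N,
   (Psi m *m expv (- (Psi m *m a)) -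
     ((K0 * E2) *: const_mx 1 - (K0 * E2 * mu) *: eps +
      (2 * (E1 - E2) * (1 - mu * Psi_first (m:=m) eps)) *: cvec m)) i 0
   = \sum_(j < N) psi_entry m i j * (v j * r j).
  move=> i; rewrite mxE mxE.
  under eq_bigr => j _ do rewrite mxE hexp (@alg2 R _ _ (pe j) mu).
  rewrite !big_split /= -!mulr_sumr.
  rewrite psi_row // (@sum_delta0 R _ (fun j => psi_entry m i j)) //.
  rewrite h3 (@sum_delta0 R _ (fun j => psi_entry m i j * pe j)) //.
  rewrite !mxE.
  apply: (@alg R K0 E1 E2 mu (psi_entry m i 0) (pe 0%N) (eps i 0) (if odd i.+1 then 1 else 0)) => //.
  by rewrite psi_0 //; case: ifP => _; rewrite ?mulr1 ?mulr0.
set L := l1norm eps.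
have hL0 : 0 <= L by apply: sumr_ge0 => k _; exact: normr_ge0.
have hL1 : L * (4 * `|mu| + 1) < 1.
  have hp : 0 < 4 * `|mu| + 1 by have := normr_ge0 mu; lra.
  by move: hL; rewrite -/L ltr_pdivlMr.
have hpe : forall j : 'I_N, `|pe j| <= 2 * L.
  move=> j; rewrite /pe /L /l1norm mulr_sumr.
  apply: le_trans (ler_norm_sum _ _ _) _; apply: ler_sum => k _.
  rewrite normrM; apply: ler_wpM2r; [exact: normr_ge0 | exact: had_abs].
have hterm : forall i j : 'I_N, `|psi_entry m i j * (v j * r j)| <= 2 * ((E1 + E2) * (8 * mu ^+ 2 * L ^+ 2)).
  move=> i j.
  have [hx1 hx2] := @xbound R _ _ _ (hpe j) hL0 hL1.
  have [hr1 hr2] := andP (@exp_rem R _ hx1).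
  have hv : 0 <= v j /\ v j <= E1 + E2.
    rewrite /v; have := expR_gt0 (- (K0 * mu)); have := expR_gt0 (- (K0 * mu / 2)).
    rewrite -/E1 -/E2; case: ifP => _ ? ?; split; lra.
  case: hv => hv1 hv2.
  apply: bnd => //; first exact: had_abs.
  have hx3 : (x j) ^+ 2 <= 4 * mu ^+ 2 * L ^+ 2 := hx2.
  rewrite (@e8 R).
  apply: le_trans hr2 _; apply: ler_wpM2l => //.
have hb : forall i : 'I_N, `|\sum_(j < N) psi_entry m i j * (v j * r j)|
     <= N%:R * (2 * ((E1 + E2) * (8 * mu ^+ 2 * L ^+ 2))).
  move=> i; apply: le_trans (ler_norm_sum _ _ _) _.
  apply: le_trans (ler_sum _ (fun j _ => hterm i j)) _.
  by rewrite sumr_const card_ord -[X in X <= _]mulr_natl.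
rewrite {1}/l1norm.
under eq_bigr => i _ do rewrite key.
apply: le_trans (ler_sum _ (fun i _ => hb i)) _.
by rewrite sumr_const card_ord -[X in X <= _]mulr_natl eqC.
Qed.
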